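(* Let $\mathcal{H}$ be a separable Hilbert space and $H$ a positive Hermitian operator on $\mathcal{H}$ with purely discrete spectrum, such that there is no infinite-dimensional subspace on which $H$ is bounded, and let $E>0$. Given any $\epsilon>0$ there is $\delta>0$ such that for any positive operators $A,A'$ with $\mathrm{Tr}\,AH\le E$ and $\mathrm{Tr}\,A'H\le E$, if $\|A-A'\|_2<\delta$ then $|\mathrm{Tr}(A-A')|<\epsilon$.
   Context: $\|\cdot\|_2$ is the Hilbert–Schmidt norm $\|A\|_2=\sqrt{\mathrm{Tr}\,A^\dagger A}$. For positive $A$, $\mathrm{Tr}\,AH=\sum_n\langle n|A|n\rangle E_n\in[0,\infty]$ in an eigenbasis $\{|n\rangle\}$ of $H$ with eigenvalues $E_n$. *)

(* Defs.v *)
From HB Require Import structures.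
From mathcomp Require Import all_boot all_order all_algebra.
From mathcomp Require Import all_classical all_reals all_analysis.
From mathcomp Require Import complex.
Set Implicit Arguments. Unset Strict Implicit. Unset Printing Implicit Defensive.
Import Order.TTheory GRing.Theory Num.Theory.
Local Open Scope ring_scope.

(* Model: the separable Hilbert space is l^2(nat) over C = R[i], with the
   orthonormal basis {|n>} an eigenbasis of H, H |n> = Ev n |n>.
   Vectors are sequences nat -> R[i]; operators A are given by their
   matrix entries A m n = <m|A|n>. *)

Section Defs.
Variable R : realType.
Local Notation C := (R[i]).

Definition sqnorm (z : C) : R := (complex.Re z) ^+ 2 + (complex.Im z) ^+ 2.

(* sum_n |x n|^2 in the extended reals (x is in l^2 iff this is finite) *)
Definition l2sq (x : nat -> C) : \bar R := (\sum_(n <oo) (sqnorm (x n))%:E)%E.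

(* ||H x||^2 = sum_n E_n^2 |x n|^2 *)
Definition Hsq (Ev : nat -> R) (x : nat -> C) : \bar R :=
  (\sum_(n <oo) ((Ev n) ^+ 2 * sqnorm (x n))%:E)%E.

Definition domH (Ev : nat -> R) (x : nat -> C) : Prop :=
  (l2sq x < +oo)%E /\ (Hsq Ev x < +oo)%E.

Definition subspace_domH (Ev : nat -> R) (V : set (nat -> C)) : Prop :=
  [/\ V (fun _ => 0),
      (forall x y, V x -> V y -> V (fun n => x n + y n)),
      (forall (c : C) x, V x -> V (fun n => c * x n)) &
      (forall x, V x -> domH Ev x)].

Definition H_bounded_on (Ev : nat -> R) (V : set (nat -> C)) : Prop :=
  exists M : R, forall x, V x -> (Hsq Ev x <= (M ^+ 2)%:E * l2sq x)%E.

Definition inf_dim (V : set (nat -> C)) : Prop :=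
  forall k : nat, exists f : 'I_k -> (nat -> C),
    (forall i, V (f i)) /\
    (forall c : 'I_k -> C, (forall n, \sum_(i < k) c i * f i n = 0) ->
       forall i, c i = 0).

Definition no_inf_dim_bounded_subspace (Ev : nat -> R) : Prop :=
  forall V : set (nat -> C), subspace_domH Ev V -> H_bounded_on Ev V -> ~ inf_dim V.

Definition supp_below (N : nat) (x : nat -> C) : Prop := forall n, (N <= n)%N -> x n = 0.

Definition form (A : nat -> nat -> C) (N : nat) (y x : nat -> C) : C :=
  \sum_(m < N) \sum_(n < N) conjc (y m) * A m n * x n.

(* A is (the matrix of) a bounded positive operator on l^2(nat):
   <x|Ax> >= 0 (in particular real) on the dense subspace of finitely
   supported vectors, and A is bounded there. *)
Definition pos_op (A : nat -> nat -> C) : Prop :=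
  (forall N x, supp_below N x -> 0 <= form A N x x) /\
  (exists M : R, forall N x y, supp_below N x -> supp_below N y ->
     sqnorm (form A N y x) <=
       M ^+ 2 * (\sum_(n < N) sqnorm (x n)) * (\sum_(n < N) sqnorm (y n))).

(* Tr A = sum_n <n|A|n> (A positive, so diagonal entries are real >= 0) *)
Definition trace (A : nat -> nat -> C) : \bar R :=
  (\sum_(n <oo) (complex.Re (A n n))%:E)%E.

Definition trAH (Ev : nat -> R) (A : nat -> nat -> C) : \bar R :=
  (\sum_(n <oo) (complex.Re (A n n) * Ev n)%:E)%E.

(* ||A||_2^2 = Tr A^dagger A = sum_{m,n} |<m|A|n>|^2 *)
Definition hs_norm2 (A : nat -> nat -> C) : \bar R :=
  (\sum_(m <oo) \sum_(n <oo) (sqnorm (A m n))%:E)%E.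

End Defs.

(* Main.v *)
Require Import Defs.
From HB Require Import structures.
From mathcomp Require Import all_boot all_order all_algebra.
From mathcomp Require Import all_classical all_reals all_analysis.
From mathcomp Require Import complex.
From mathcomp Require Import ring lra.
Import Order.TTheory GRing.Theory Num.Theory.
Local Open Scope ring_scope.

Section Helpers.
Variable R : realType.

Lemma ser_ub (u : nat -> R) (x : R) : (forall n, 0 <= u n) ->
  (forall K, \sum_(0 <= k < K) u k <= x) ->
  (\sum_(k <oo) (u k)%:E <= x%:E)%E.
Proof.
move=> u0 H; apply: lime_le.
  by apply: is_cvg_nneseries => n _ _; rewrite lee_fin.
by apply: nearW => K; rewrite sumEFin lee_fin.
Qed.

Lemma ser_lb (u : nat -> R) K : (forall n, 0 <= u n) ->
  ((\sum_(0 <= k < K) u k)%:E <= \sum_(k <oo) (u k)%:E)%E.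
Proof.
move=> u0; rewrite -sumEFin; apply: nneseries_lim_ge => n _ _.
by rewrite lee_fin.
Qed.

Lemma ser_fin_supp (u : nat -> R) K : (forall n, 0 <= u n) ->
  (forall n, (K <= n)%N -> u n = 0) -> (\sum_(n <oo) (u n)%:E < +oo)%E.
Proof.
move=> u0 uK.
rewrite (@nneseries_split _ _ 0 K); last by move=> k _; rewrite lee_fin.
rewrite add0n eseries0 ?adde0; last by move=> i Ki _; rewrite uK.
by rewrite sumEFin ltry.
Qed.

Lemma ser_term (u : nat -> R) n : (forall n, 0 <= u n) ->
  ((u n)%:E <= \sum_(k <oo) (u k)%:E)%E.
Proof.
move=> u0; rewrite (@nneseriesD1 _ _ n xpredT) //; last by move=> k _; rewrite lee_fin.
rewrite leeDl //; apply: nneseries_ge0 => k _ _; by rewrite lee_fin.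
Qed.

Lemma tailbound (a Ev : nat -> R) N (M : R) (E : R) : (forall n, 0 <= a n) ->
  (forall n, 0 <= Ev n) -> 0 < M -> (forall n, (N <= n)%N -> M <= Ev n) ->
  (\sum_(n <oo) (a n * Ev n)%:E <= E%:E)%E ->
  exists s, (\sum_(n <oo) (a n)%:E)%E = s%:E /\
    \sum_(0 <= n < N) a n <= s <= \sum_(0 <= n < N) a n + E / M.
Proof.
move=> a0 E0 M0 HM HE.
have aE0 n : 0 <= a n * Ev n by rewrite mulr_ge0.
have pE K : \sum_(0 <= k < K) (a k * Ev k) <= E.
  by rewrite -lee_fin; apply: le_trans HE; apply: ser_lb.
have ub : (\sum_(n <oo) (a n)%:E <= (\sum_(0 <= n < N) a n + E / M)%:E)%E.
  apply: ser_ub => // K.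
  have hN0 : 0 <= \sum_(0 <= n < N) a n by rewrite sumr_ge0.
  have EM0 : 0 <= E / M.
    have E0' : 0 <= E by have := pE 0%N; rewrite big_geq.
    by rewrite divr_ge0 // ltW.
  case: (leqP K N) => KN.
    rewrite (big_cat_nat (leq0n K) KN) //=.
    rewrite -addrA lerDl addr_ge0 // sumr_ge0 //.
  rewrite (big_cat_nat (leq0n N) (ltnW KN)) //= lerD2l.
  apply: (@le_trans _ _ (\sum_(N <= k < K) (a k * Ev k / M))).
    apply: ler_sum_nat => i /andP[Ni _].
    rewrite ler_pdivlMr // ler_wpM2l //; exact: HM.
  rewrite -mulr_suml; apply: ler_wpM2r; first by rewrite invr_ge0 ltW.
  apply: le_trans (pE K).
  rewrite (big_cat_nat (leq0n N) (ltnW KN)) //= lerDr sumr_ge0 //.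
have lb := @ser_lb a N a0.
have fin : (\sum_(n <oo) (a n)%:E)%E \is a fin_num.
  rewrite fin_numE; apply/andP; split.
    by rewrite gt_eqF // (lt_le_trans _ lb) // ltNyr.
  by rewrite lt_eqF // (le_lt_trans ub) // ltry.
exists (fine (\sum_(n <oo) (a n)%:E)%E); split; first by rewrite fineK.
by rewrite -!lee_fin fineK // lb ub.
Qed.

End Helpers.

Section H2.
Variable R : realType.

Lemma sqnorm_ge0 (z : R[i]) : 0 <= sqnorm z.
Proof. by rewrite /sqnorm addr_ge0 // sqr_ge0. Qed.

Lemma evN (Ev : nat -> R) (M : R) : (forall n, 0 <= Ev n) ->
  no_inf_dim_bounded_subspace Ev -> 0 < M ->
  exists N, forall n, (N <= n)%N -> M <= Ev n.
Proof.
move=> E0 Hno M0.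
have [//|H] := pselect (exists N, forall n, (N <= n)%N -> M <= Ev n).
have H' : forall N, exists n, (N <= n)%N /\ Ev n < M.
  move=> N; apply: contrapT => H2; apply: H; exists N => n Nn.
  rewrite leNgt; apply/negP => Hlt; apply: H2; by exists n.
pose h N := proj1_sig (cid (H' N)).
have hP N : (N <= h N)%N /\ Ev (h N) < M by rewrite /h; case: (cid _).
pose g k := iter k (fun p => h p.+1) (h 0%N).
have gP k : Ev (g k) < M by case: k => [|k] /=; [exact: (hP 0%N).2 | exact: (hP _).2].
have gS k : (g k < g k.+1)%N by exact: (hP _).1.
have ginc : {homo g : i j / (i < j)%N >-> (i < j)%N}.
  by apply: homo_ltn => // y x z; exact: ltn_trans.
have ginj : injective g.
  move=> i j; case: (ltngtP i j) => // ij /eqP; last by rewrite gtn_eqF // ginc.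
  by rewrite ltn_eqF // ginc.
pose V := fun x : nat -> R[i] => (exists K, supp_below K x) /\ (forall n, M <= Ev n -> x n = 0).
have l2fin x : V x -> (l2sq x < +oo)%E.
  move=> [[K HK] _]; apply: (@ser_fin_supp _ _ K) => [n|n Kn]; first exact: sqnorm_ge0.
  by rewrite HK // /sqnorm /= expr0n /= addr0.
have Hle x : V x -> (Hsq Ev x <= (M ^+ 2)%:E * l2sq x)%E.
  move=> [_ HV]; rewrite /Hsq /l2sq -nneseriesZl; last by move=> i _; rewrite lee_fin sqnorm_ge0.
  apply: lee_nneseries => [i _ _|n _]; first by rewrite lee_fin mulr_ge0 ?sqr_ge0 ?sqnorm_ge0.
  rewrite -EFinM lee_fin; case: (ltP (Ev n) M) => hn.
    apply: ler_wpM2r; first exact: sqnorm_ge0.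
    have := E0 n; nra.
  by rewrite HV // /sqnorm /= expr0n /= addr0 !mulr0.
have subV : subspace_domH Ev V.
  split.
  - split; first by exists 0%N.
    by [].
  - move=> x y [[Kx Hx] Vx] [[Ky Hy] Vy]; split.
      exists (maxn Kx Ky) => n; rewrite geq_max => /andP[h1 h2].
      by rewrite Hx // Hy // addr0.
    by move=> n hn; rewrite Vx // Vy // addr0.
  - move=> c x [[Kx Hx] Vx]; split.
      by exists Kx => n hn; rewrite Hx // mulr0.
    by move=> n hn; rewrite Vx // mulr0.
  - move=> x Vx; split; first exact: l2fin.
    apply: le_lt_trans (Hle x Vx) _.
    have := l2fin x Vx.
    have : (0 <= l2sq x)%E by apply: nneseries_ge0 => i _ _; rewrite lee_fin sqnorm_ge0.
    case: (l2sq x) => // r _ _; by rewrite -EFinM ltry.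
have hb : H_bounded_on Ev V by exists M.
exfalso; apply: (Hno V subV hb).
move=> k.
exists (fun i : 'I_k => fun n => if n == g i then (1 : R[i]) else 0); split.
  move=> i; split.
    exists (g i).+1 => n hn; case: eqP => // ni; move: hn; by rewrite ni ltnn.
  move=> n hn; case: eqP => // ni; move: hn; rewrite ni leNgt; by rewrite gP.
move=> c Hc i.
have := Hc (g i).
rewrite (bigD1 i) //= eqxx mulr1 big1 ?addr0 //.
move=> j ji; case: eqP => [/ginj ij|_]; last by rewrite mulr0.
by move: ji; rewrite -(inj_eq val_inj) /= ij eqxx.
Qed.

End H2.

Section H3.
Variable R : realType.

Lemma eser_term (u : nat -> \bar R) n : (forall n, (0 <= u n)%E) ->
  (u n <= \sum_(k <oo) u k)%E.
Proof.
move=> u0; rewrite (@nneseriesD1 _ _ n xpredT) //.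
rewrite leeDl //; exact: nneseries_ge0.
Qed.

Lemma diag_ge0 (A : nat -> nat -> R[i]) n : pos_op A -> 0 <= complex.Re (A n n).
Proof.
move=> [Hp _].
pose e m : R[i] := if m == n then 1 else 0.
have se : supp_below n.+1 e.
  by move=> m hm; rewrite /e; case: eqP => // mn; move: hm; rewrite mn ltnn.
have := Hp n.+1 e se; rewrite /Defs.form.
have ne (m : 'I_n.+1) : m != ord_max -> (val m == n) = false.
  by move=> h; apply: contraNF h => /eqP h; apply/eqP/val_inj.
have c0 : conjc (0 : R[i]) = 0 by rewrite /= oppr0.
rewrite (bigD1 ord_max) //= [X in _ + X]big1 ?addr0; last first.
  by move=> m hm; have {}hm := ne m hm; apply: big1 => k _; rewrite /e hm c0 !mul0r.
rewrite (bigD1 ord_max) //= [X in _ + X]big1 ?addr0; last first.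
  by move=> k hk; have {}hk := ne k hk; rewrite /e hk mulr0.
rewrite /e eqxx.
have c1 : conjc (1 : R[i]) = 1 by rewrite /= oppr0.
rewrite c1 mul1r mulr1.
by case: (A n n) => x y; rewrite /Order.le /= => /andP[].
Qed.

End H3.

Theorem mainTheorem6 (R : realType) (Ev : nat -> R) (Emax : R) :
  (forall n, 0 <= Ev n) ->
  no_inf_dim_bounded_subspace Ev ->
  0 < Emax ->
  forall eps : R, 0 < eps ->
  exists2 delta : R, 0 < delta &
    forall A A' : nat -> nat -> R[i],
      pos_op A -> pos_op A' ->
      (trAH Ev A <= Emax%:E)%E -> (trAH Ev A' <= Emax%:E)%E ->
      (hs_norm2 (fun m n => (A m n - A' m n)%R) < (delta ^+ 2)%:E)%E ->
      (`| trace A - trace A' | < eps%:E)%E.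
Proof.
move=> E0 Hno Emax0 eps eps0.
pose M := 4 * Emax / eps.
have M0 : 0 < M by rewrite /M divr_gt0 // mulr_gt0.
have EM : Emax / M = eps / 4.
  rewrite /M; field; rewrite ?gt_eqF //.
have [N HN] := @evN R Ev M E0 Hno M0.
pose d := eps / (4 * (N%:R + 1)).
have Np : 0 < (N%:R + 1 : R) by rewrite ltr_wpDl // ler0n.
have d0 : 0 < d by rewrite /d divr_gt0 // mulr_gt0.
have dN : d * N%:R <= eps / 4.
  have h : d * (4 * (N%:R + 1)) = eps by rewrite /d mulfVK // gt_eqF // mulr_gt0.
  have := ler0n R N; nra.
exists d => // A A' pA pA' hA hA' hs.
pose a n := complex.Re (A n n).
pose b n := complex.Re (A' n n).
have a0 n : 0 <= a n by exact: diag_ge0.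
have b0 n : 0 <= b n by exact: diag_ge0.
have [sa [Sa /andP[la ua]]] := @tailbound R a Ev N M Emax a0 E0 M0 HN hA.
have [sb [Sb /andP[lb ub]]] := @tailbound R b Ev N M Emax b0 E0 M0 HN hA'.
rewrite /trace -/a -/b.
rewrite (_ : (\sum_(n <oo) (a n)%:E)%E = sa%:E) // (_ : (\sum_(n <oo) (b n)%:E)%E = sb%:E) //.
have dn n : `|a n - b n| <= d.
  have h1 : ((sqnorm (A n n - A' n n))%:E <= hs_norm2 (fun m n => (A m n - A' m n)%R))%E.
    rewrite /hs_norm2.
    apply: (le_trans _ (@eser_term R (fun m => \sum_(k <oo) (sqnorm (A m k - A' m k))%:E)%E n _)); last first.
      by move=> m; apply: nneseries_ge0 => k _ _; rewrite lee_fin; exact: sqnorm_ge0.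
    by apply: (@ser_term R (fun k => sqnorm (A n k - A' n k))) => k; exact: sqnorm_ge0.
  have h2 := le_lt_trans h1 hs; rewrite lte_fin in h2.
  have h3 : (a n - b n) ^+ 2 <= sqnorm (A n n - A' n n).
    rewrite /a /b /sqnorm; case: (A n n) => x y; case: (A' n n) => z w /=.
    by rewrite lerDl sqr_ge0.
  rewrite ler_norml; apply/andP; split; nra.
have hd : `|\sum_(0 <= n < N) a n - \sum_(0 <= n < N) b n| <= eps / 4.
  rewrite -sumrB; apply: le_trans (ler_norm_sum _ _ _) _.
  apply: le_trans dN; apply: le_trans (ler_sum_nat (G := fun=> d) _) _.
    by move=> i _; exact: dn.
  by rewrite sumr_const_nat subn0 mulr_natr.
rewrite -EFinB /= lte_fin.
move: hd; rewrite !ler_norml ltr_norml => /andP[h1 h2].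
rewrite EM in ua ub.
apply/andP; split; lra.
Qed.
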